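(* Let $p$ be a prime and $M=\mathbb Z_{p^2}^2$, so $\mathrm{GL}(M)=\mathrm{GL}(2,\mathbb Z_{p^2})$. (i) Let $f=X-a$, $a\in\mathbb Z_p^\times$. Every element of $\mathrm{GL}(M)_f^{(1,1)}$ is conjugate in $\mathrm{GL}(2,\mathbb Z_{p^2})$ to exactly one of the following, where $b$ is an integer with $0<b<p$, $b\equiv a\pmod p$: (i.1) $bI+p\begin{bmatrix}\alpha&0\\0&\delta\end{bmatrix}$ with integers $0\le\alpha\le\delta<p$; (i.2) $bI+p\begin{bmatrix}\alpha&1\\0&\alpha\end{bmatrix}$ with $\alpha\in\mathbb Z_p$; (i.3) $bI+p\begin{bmatrix}0&1\\-b_0&-b_1\end{bmatrix}$ with $X^2+b_1X+b_0\in\mathbb Z_p[X]$ irreducible. (ii) Let $f=X-a$, $a\in\mathbb Z_p^\times$. Every element of $\mathrm{GL}(M)_f^{(2)}$ is conjugate in $\mathrm{GL}(2,\mathbb Z_{p^2})$ to exactly one matrix $\begin{bmatrix}b&1\\0&b\end{bmatrix}+p\begin{bmatrix}\alpha&0\\ \gamma&0\end{bmatrix}$, with $b$ an integer, $0<b<p$, $b\equiv a\pmod p$, and $\alpha,\gamma\in\mathbb Z_p$. (iii) Let $f=X^2+a_1X+a_0\in\mathbb Z_p[X]$ be irreducible. Every element of $\mathrm{GL}(M)_f$ is conjugate in $\mathrm{GL}(2,\mathbb Z_{p^2})$ to exactly one matrix $\begin{bmatrix}0&1\\-b_0&-b_1\end{bmatrix}+p\begin{bmatrix}\alpha&\beta\\0&0\end{bmatrix}$,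 where $b_0,b_1$ are the integers with $0\le b_0,b_1<p$, $b_0\equiv a_0$, $b_1\equiv a_1\pmod p$, and $\alpha,\beta\in\mathbb Z_p$.
   Context: $\mathbb Z_m=\mathbb Z/m\mathbb Z$. For $x=c+p\mathbb Z\in\mathbb Z_p$, $px$ denotes the element $pc+p^2\mathbb Z$ of $\mathbb Z_{p^2}$; integers are regarded as elements of $\mathbb Z_{p^2}$ by reduction. For $A\in\mathrm{GL}(2,\mathbb Z_{p^2})$, $\overline A\in\mathrm{GL}(2,\mathbb Z_p)$ is its entrywise reduction mod $p$. For monic irreducible $f\in\mathbb Z_p[X]$, $f\neq X$: $\mathrm{GL}(M)_f$ is the set of $A$ such that the minimal polynomial of $\overline A$ is a power of $f$. For $f=X-a$: $\mathrm{GL}(M)_f^{(1,1)}$ is the set of $A$ such that $\overline A$ has elementary divisors $f,f$ (i.e. $\overline A=aI$), and $\mathrm{GL}(M)_f^{(2)}$ is the set of $A$ such that $\overline A$ has the single elementary divisor $f^2$. Conjugacy classes correspond to isomorphism classes of $\Lambda$-modules ($\Lambda=\mathbb Z[t,t^{-1}]$) with underlying group $\mathbb Z_{p^2}^2$ and $t$ acting by the matrix. *)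

(* Defs.v *)
From HB Require Import structures.
From mathcomp Require Import all_boot all_order all_algebra.
Set Implicit Arguments. Unset Strict Implicit. Unset Printing Implicit Defensive.
Import GRing.Theory.
Local Open Scope ring_scope.

(* Z_p is rendered as 'F_p (p prime), Z_{p^2} as 'Z_(p ^ 2). *)

(* p x for x in Z_p : the element p*c + p^2 Z of Z_{p^2} *)
Definition pmul (p : nat) (x : 'F_p) : 'Z_(p ^ 2) := (p * nat_of_ord x)%N%:R.

Definition redmx (p : nat) (A : 'M['Z_(p ^ 2)]_2) : 'M['F_p]_2 :=
  map_mx (fun x : 'Z_(p ^ 2) => (nat_of_ord x)%:R) A.

Definition mx2 (R : Type) (a b c d : R) : 'M[R]_2 :=
  \matrix_(i < 2, j < 2)
    if i == ord0 then (if j == ord0 then a else b) else (if j == ord0 then c else d).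

Definition GLconj (p : nat) (A B : 'M['Z_(p ^ 2)]_2) : Prop :=
  exists P : 'M['Z_(p ^ 2)]_2, P \in unitmx /\ B = invmx P *m A *m P.

(* GL(M)_f^{(1,1)} for f = X - a : reduction is a I *)
Definition GL_f11 (p : nat) (a : 'F_p) (A : 'M['Z_(p ^ 2)]_2) : Prop :=
  A \in unitmx /\ redmx A = a%:M.

(* GL(M)_f^{(2)} for f = X - a : reduction has single elementary divisor f^2,
   i.e. its minimal polynomial is (X - a)^2 *)
Definition GL_f2 (p : nat) (a : 'F_p) (A : 'M['Z_(p ^ 2)]_2) : Prop :=
  A \in unitmx /\ mxminpoly (redmx A) = ('X - a%:P) ^+ 2.

(* GL(M)_f : minimal polynomial of the reduction is a power of f *)
Definition GL_f (p : nat) (f : {poly 'F_p}) (A : 'M['Z_(p ^ 2)]_2) : Prop :=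
  A \in unitmx /\ exists k : nat, mxminpoly (redmx A) = f ^+ k.

Definition NF_i (p b : nat) (N : 'M['Z_(p ^ 2)]_2) : Prop :=
  (exists al de : nat, (al <= de)%N /\ (de < p)%N /\
     N = (b%:R)%:M + mx2 (p * al)%N%:R 0 0 (p * de)%N%:R)
  \/ (exists al : 'F_p, N = (b%:R)%:M + mx2 (pmul al) (pmul 1) 0 (pmul al))
  \/ (exists b0 b1 : 'F_p,
        irreducible_poly ('X^2 + b1%:P * 'X + b0%:P) /\
        N = (b%:R)%:M + mx2 0 (pmul 1) (pmul (- b0)) (pmul (- b1))).

Definition NF_ii (p b : nat) (N : 'M['Z_(p ^ 2)]_2) : Prop :=
  exists al ga : 'F_p,
    N = mx2 b%:R 1 0 b%:R + mx2 (pmul al) 0 (pmul ga) 0.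

Definition NF_iii (p b0 b1 : nat) (N : 'M['Z_(p ^ 2)]_2) : Prop :=
  exists al be : 'F_p,
    N = mx2 0 1 (- b0%:R) (- b1%:R) + mx2 (pmul al) (pmul be) 0 0.

(* Main.v *)
Require Import Defs.
From HB Require Import structures.
From mathcomp Require Import all_boot all_order all_algebra.
From mathcomp Require Import ring zify.
Set Implicit Arguments. Unset Strict Implicit. Unset Printing Implicit Defensive.
Import GRing.Theory.
Local Open Scope ring_scope.

Lemma ord2_cases (i : 'I_2) : i = 0 \/ i = 1.
Proof. case: i => [[|[|k]] Hi]; [left|right|]; try by apply: val_inj. by []. Qed.

Lemma mx2E (R : Type) (A : 'M[R]_2) : A = mx2 (A 0 0) (A 0 1) (A 1 0) (A 1 1).
Proof.
apply/matrixP => i j; rewrite mxE.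
by case: (ord2_cases i) => ->; case: (ord2_cases j) => ->.
Qed.

Lemma mx2_00 (R : Type) (a b c d : R) : mx2 a b c d 0 0 = a. Proof. by rewrite mxE. Qed.
Lemma mx2_01 (R : Type) (a b c d : R) : mx2 a b c d 0 1 = b. Proof. by rewrite mxE. Qed.
Lemma mx2_10 (R : Type) (a b c d : R) : mx2 a b c d 1 0 = c. Proof. by rewrite mxE. Qed.
Lemma mx2_11 (R : Type) (a b c d : R) : mx2 a b c d 1 1 = d. Proof. by rewrite mxE. Qed.

Lemma mx2_inj (R : Type) (a b c d a' b' c' d' : R) :
  mx2 a b c d = mx2 a' b' c' d' -> [/\ a = a', b = b', c = c' & d = d'].
Proof.
move=> e; split.
- by rewrite -(mx2_00 a b c d) e mx2_00.
- by rewrite -(mx2_01 a b c d) e mx2_01.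
- by rewrite -(mx2_10 a b c d) e mx2_10.
- by rewrite -(mx2_11 a b c d) e mx2_11.
Qed.

Lemma mx2_mul (R : pzRingType) (a b c d e f g h : R) :
  mx2 a b c d *m mx2 e f g h = mx2 (a*e + b*g) (a*f + b*h) (c*e + d*g) (c*f + d*h).
Proof.
apply/matrixP => i j; rewrite !mxE !big_ord_recl big_ord0 !mxE.
by case: (ord2_cases i) => ->; case: (ord2_cases j) => ->; rewrite /= ?mxE /= ?addr0.
Qed.

Lemma mx2_add (R : nmodType) (a b c d e f g h : R) :
  mx2 a b c d + mx2 e f g h = mx2 (a + e) (b + f) (c + g) (d + h).
Proof.
apply/matrixP => i j; rewrite !mxE.
by case: (ord2_cases i) => ->; case: (ord2_cases j) => ->.
Qed.

Lemma mx2_scalar (R : pzRingType) (a : R) : a%:M = mx2 a 0 0 a.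
Proof.
apply/matrixP => i j; rewrite !mxE.
by case: (ord2_cases i) => ->; case: (ord2_cases j) => ->.
Qed.

Lemma mx2_one (R : pzRingType) : (1%:M : 'M[R]_2) = mx2 1 0 0 1.
Proof. exact: mx2_scalar. Qed.

Lemma mx2_map (R S : Type) (f : R -> S) (a b c d : R) :
  map_mx f (mx2 a b c d) = mx2 (f a) (f b) (f c) (f d).
Proof.
apply/matrixP => i j; rewrite !mxE.
by case: (ord2_cases i) => ->; case: (ord2_cases j) => ->.
Qed.

Lemma mx2_det (R : comPzRingType) (a b c d : R) : \det (mx2 a b c d) = a * d - b * c.
Proof.
rewrite (expand_det_row _ 0) !big_ord_recl big_ord0 /cofactor !det_mx11 /=.
rewrite !mxE /= expr0 expr1; ring.
Qed.

Lemma mx2_tr (R : pzRingType) (a b c d : R) : \tr (mx2 a b c d) = a + d.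
Proof. by rewrite /mxtrace !big_ord_recl big_ord0 !mxE /= addr0. Qed.

Definition cj (R : comUnitRingType) n (A B : 'M[R]_n) :=
  exists P : 'M[R]_n, P \in unitmx /\ A *m P = P *m B.

Lemma cj_refl (R : comUnitRingType) n (A : 'M[R]_n) : cj A A.
Proof. exists 1%:M; split; [exact: unitmx1|by rewrite mulmx1 mul1mx]. Qed.

Lemma cj_sym (R : comUnitRingType) n (A B : 'M[R]_n) : cj A B -> cj B A.
Proof.
move=> [P [uP e]]; exists (invmx P); split; first by rewrite unitmx_inv.
have -> : B = invmx P *m (A *m P) by rewrite e mulKmx.
by rewrite -mulmxA -mulmxA mulmxV // mulmx1.
Qed.

Lemma cj_trans (R : comUnitRingType) n (A B C : 'M[R]_n) : cj A B -> cj B C -> cj A C.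
Proof.
move=> [P [uP e]] [Q [uQ f]]; exists (P *m Q); split; first by rewrite unitmx_mul uP.
by rewrite mulmxA e -mulmxA f mulmxA.
Qed.

Lemma GLconjE (p : nat) (A B : 'M['Z_(p ^ 2)]_2) : GLconj A B <-> cj A B.
Proof.
split=> [[P [uP ->]]|[P [uP e]]]; exists P; split => //.
  by rewrite -!mulmxA mulKVmx.
by rewrite -mulmxA e mulmxA mulVmx // mul1mx.
Qed.

Lemma cj_inv (R : comUnitRingType) n (A B : 'M[R]_n) :
  cj A B -> \tr A = \tr B /\ \det A = \det B.
Proof.
move=> [P [uP e]]; have eB : B = invmx P *m (A *m P) by rewrite e mulKmx.
split.
  by rewrite eB mxtrace_mulC -mulmxA mulmxV // mulmx1.
have : \det P * \det A = \det P * \det B by rewrite -!det_mulmx -e !det_mulmx mulrC.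
move: uP; rewrite unitmxE => uP; exact: mulrI.
Qed.

Lemma cj_shift (R : comUnitRingType) n (s : R) (A B : 'M[R]_n) :
  cj A B -> cj (s%:M + A) (s%:M + B).
Proof.
move=> [P [uP e]]; exists P; split => //.
by rewrite mulmxDl mulmxDr e mul_scalar_mx mul_mx_scalar.
Qed.

Lemma cj_unshift (R : comUnitRingType) n (s : R) (A B : 'M[R]_n) :
  cj (s%:M + A) (s%:M + B) -> cj A B.
Proof.
move=> h; have := cj_shift (- s) h.
by rewrite !addrA -!raddfD /= addNr !raddf0 ?add0r.
Qed.

Lemma cj_comp (R : comUnitRingType) (a b c d : R) :
  [\/ c \is a GRing.unit, b \is a GRing.unit | (c + d - a - b) \is a GRing.unit] ->
  cj (mx2 a b c d) (mx2 0 (- (a * d - b * c)) 1 (a + d)).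
Proof.
have key : forall v0 v1 : R,
  v0 * (c * v0 + d * v1) - (a * v0 + b * v1) * v1 \is a GRing.unit ->
  cj (mx2 a b c d) (mx2 0 (- (a * d - b * c)) 1 (a + d)).
  move=> v0 v1 u; exists (mx2 v0 (a * v0 + b * v1) v1 (c * v0 + d * v1)); split.
    by rewrite unitmxE mx2_det.
  rewrite !mx2_mul; congr mx2; ring.
case=> u.
- by apply: (key 1 0); rewrite (_ : _ - _ = c) //; ring.
- by apply: (key 0 1); rewrite (_ : _ - _ = - b) ?unitrN //; ring.
- apply: (key 1 1); rewrite (_ : _ - _ = c + d - a - b) //; ring.
Qed.

Lemma cj_same (R : comUnitRingType) (a b c d a' b' c' d' : R) :
  [\/ c \is a GRing.unit, b \is a GRing.unit | (c + d - a - b) \is a GRing.unit] ->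
  [\/ c' \is a GRing.unit, b' \is a GRing.unit | (c' + d' - a' - b') \is a GRing.unit] ->
  a + d = a' + d' -> a * d - b * c = a' * d' - b' * c' ->
  cj (mx2 a b c d) (mx2 a' b' c' d').
Proof.
move=> u u' e1 e2; apply: cj_trans (cj_comp u) _.
by rewrite e1 e2; apply: cj_sym; apply: cj_comp.
Qed.

Lemma cj_inv2 (R : comUnitRingType) (a b c d a' b' c' d' : R) :
  cj (mx2 a b c d) (mx2 a' b' c' d') ->
  a + d = a' + d' /\ a * d - b * c = a' * d' - b' * c'.
Proof. by move/cj_inv; rewrite !mx2_tr !mx2_det. Qed.

Lemma cj_scalar (F : fieldType) (c : F) (B : 'M[F]_2) : cj c%:M B -> B = c%:M.
Proof.
move=> [P [uP e]]; have -> : B = invmx P *m (P *m B) by rewrite mulKmx.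
by rewrite -e -scalar_mxC mulKmx.
Qed.

Section Poly.
Variable F : fieldType.

Lemma irr_noroot (q : {poly F}) r : irreducible_poly q -> size q != 2 -> root q r -> False.
Proof.
move=> [_ hirr] s2 /factor_theorem [g eq]; have := hirr ('X - r%:P).
rewrite size_XsubC /= => /(_ isT); rewrite eq dvdp_mull // => /(_ isT) /eqp_size.
by rewrite -eq size_XsubC => e; rewrite -e in s2.
Qed.

Lemma quad_size (c1 c0 : F) : size ('X^2 + c1%:P * 'X + c0%:P) = 3.
Proof.
rewrite -addrA size_polyDl size_polyXn //.
rewrite size_MXaddC; case: ifP => // _.
by rewrite size_polyC; case: (c1 != 0).
Qed.

Lemma quad_coef1 (c1 c0 : F) : ('X^2 + c1%:P * 'X + c0%:P)`_1 = c1.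
Proof. by rewrite !coefE /= mulr1 add0r addr0. Qed.

Lemma quad_coef0 (c1 c0 : F) : ('X^2 + c1%:P * 'X + c0%:P)`_0 = c0.
Proof. by rewrite !coefE /= mulr0 !add0r. Qed.

Lemma quad_monic (c1 c0 : F) : ('X^2 + c1%:P * 'X + c0%:P) \is monic.
Proof.
rewrite monicE /lead_coef quad_size /= !coefE /=.
by rewrite mulr0 addr0 addr0.
Qed.

Lemma quad_root (c1 c0 r : F) : root ('X^2 + c1%:P * 'X + c0%:P) r = (r * r + c1 * r + c0 == 0).
Proof. by rewrite /root !hornerE expr2. Qed.

Lemma sq_quad (a : F) : ('X - a%:P) ^+ 2 = 'X^2 + (- (a + a))%:P * 'X + (a * a)%:P.
Proof. rewrite polyCN polyCD polyCM; ring. Qed.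

Lemma minpoly_quad (a b c d c1 c0 : F) :
  mxminpoly (mx2 a b c d) = 'X^2 + c1%:P * 'X + c0%:P ->
  [/\ a + d = - c1, a * d - b * c = c0 & ~ (c = 0 /\ b = 0 /\ a = d)].
Proof.
set B := mx2 a b c d; set g := _ + _ + _ => eg.
have ch : char_poly B = g.
  apply/eqP; rewrite -eqp_monic ?char_poly_monic ?quad_monic //.
  rewrite eqp_sym -eg -dvdp_size_eqp ?mxminpoly_dvd_char //.
  by rewrite eg quad_size size_char_poly.
split.
- have := char_poly_trace B (isT : (0 < 2)%N); rewrite ch quad_coef1 mx2_tr => ->.
  by rewrite opprK.
- have := char_poly_det B; rewrite ch quad_coef0 mx2_det expr2 mulrNN !mul1r.
  by move=> ->.
- move=> [c0' [b0 ad]]; have : mxminpoly B %| 'X - a%:P.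
    apply: mxminpoly_min; rewrite rmorphB /= horner_mx_X horner_mx_C.
    by rewrite /B c0' b0 -ad mx2_scalar subrr.
  move/dvdp_leq; rewrite polyXsubC_eq0 eg quad_size size_XsubC => /(_ isT).
  by [].
Qed.

Lemma nonscalar_units (a b c d : F) : ~ (c = 0 /\ b = 0 /\ a = d) ->
  [\/ c \is a GRing.unit, b \is a GRing.unit | (c + d - a - b) \is a GRing.unit].
Proof.
move=> h; rewrite !unitfE.
case: (eqVneq c 0) => [c0|]; last by constructor 1.
case: (eqVneq b 0) => [b0|]; last by constructor 2.
constructor 3; rewrite c0 b0 add0r subr0 subr_eq0; apply/eqP => e; apply: h; split => //.
Qed.

Lemma minpoly_pow (B : 'M[F]_2) (f : {poly F}) k :
  size f = 3 -> mxminpoly B = f ^+ k -> mxminpoly B = f.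
Proof.
move=> sf e.
have h1 : (size (mxminpoly B) <= 3)%N.
  rewrite -(size_char_poly B); apply: dvdp_leq; last exact: mxminpoly_dvd_char.
  exact: monic_neq0 (char_poly_monic B).
have h2 : (2 <= size (mxminpoly B))%N.
  by rewrite size_mxminpoly ltnS mxminpoly_nonconstant.
have h3 := size_exp f k; rewrite -e sf /= in h3.
have hk : k = 1%N.
  move: h1 h2 h3; case: (size (mxminpoly B)) => [|n] //= h1 h2 h3.
  rewrite h3 in h1 h2; lia.
by rewrite e hk expr1.
Qed.

End Poly.

Section Red.
Variable p : nat.
Hypothesis pr_p : prime p.
Local Notation R := ('Z_(p ^ 2)).
Local Notation F := ('F_p).

Lemma p_gt1 : (1 < p)%N. Proof. exact: prime_gt1. Qed.
Lemma p2_gt1 : (1 < p ^ 2)%N.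
Proof. have := p_gt1; rewrite expnS expn1 => h. by rewrite (ltn_trans h) // -{1}(muln1 p) ltn_pmul2l // ltnW. Qed.

Definition pi (x : R) : F := (nat_of_ord x)%:R.
Definition iota (x : F) : R := pmul x.
Definition dlt (y : R) : F := ((nat_of_ord y) %/ p)%N%:R.
Definition lift (x : F) : R := (nat_of_ord x)%:R.

Lemma natR_eq (m n : nat) : ((m%:R : R) == n%:R) = (m == n %[mod p ^ 2]).
Proof.
apply/eqP/eqP => [e|e].
  by have := congr1 (fun z : R => nat_of_ord z) e; rewrite /= !val_Zp_nat // p2_gt1.
by apply: val_inj; rewrite /= !val_Zp_nat ?p2_gt1.
Qed.

Lemma natF_eq (m n : nat) : ((m%:R : F) == n%:R) = (m == n %[mod p]).
Proof.
apply/eqP/eqP => [e|e].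
  by have := congr1 (fun z : F => nat_of_ord z) e; rewrite /= !val_Fp_nat.
by apply: val_inj; rewrite /= !val_Fp_nat.
Qed.

Lemma valF_lt (x : F) : (nat_of_ord x < p)%N.
Proof. have h := ltn_ord x; rewrite -[X in (_ < X)%N](Fp_cast pr_p); exact: h. Qed.

Lemma natF_small (m n : nat) : (m < p)%N -> (n < p)%N -> (m%:R : F) = n%:R -> m = n.
Proof. by move=> hm hn /eqP; rewrite natF_eq !modn_small // => /eqP. Qed.

Lemma natrF (x : F) : (nat_of_ord x)%:R = x.
Proof. exact: natr_Zp. Qed.
Lemma natrR (x : R) : (nat_of_ord x)%:R = x.
Proof. exact: natr_Zp. Qed.

Lemma pi_nat n : pi n%:R = n%:R.
Proof.
apply/eqP; rewrite /pi natF_eq val_Zp_nat ?p2_gt1 //.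
by rewrite modn_dvdm // dvdn_exp.
Qed.

Lemma piD x y : pi (x + y) = pi x + pi y.
Proof.
have -> : x + y = (nat_of_ord x + nat_of_ord y)%N%:R by rewrite natrD !natrR.
by rewrite pi_nat natrD.
Qed.

Lemma piM x y : pi (x * y) = pi x * pi y.
Proof.
have -> : x * y = (nat_of_ord x * nat_of_ord y)%N%:R by rewrite natrM !natrR.
by rewrite pi_nat natrM.
Qed.

Lemma pi0 : pi 0 = 0. Proof. exact: (pi_nat 0). Qed.
Lemma pi1 : pi 1 = 1. Proof. exact: (pi_nat 1). Qed.

Lemma piN x : pi (- x) = - pi x.
Proof. by apply/eqP; rewrite -subr_eq0 opprK -piD addNr pi0. Qed.

Lemma piB x y : pi (x - y) = pi x - pi y.
Proof. by rewrite piD piN. Qed.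

Lemma iota_nat n : iota n%:R = (p * n)%N%:R.
Proof.
apply/eqP; rewrite /iota /pmul natR_eq val_Fp_nat // muln_modr.
by rewrite mulnn modn_mod.
Qed.

Lemma iotaE x : iota x = (p * nat_of_ord x)%N%:R.
Proof. by []. Qed.

Lemma iotaD x y : iota (x + y) = iota x + iota y.
Proof.
rewrite -[x]natrF -[y]natrF -natrD !iota_nat -natrD.
by rewrite mulnDr.
Qed.

Lemma iota0 : iota 0 = 0. Proof. by rewrite -(natrF 0) iota_nat /= muln0. Qed.

Lemma iotaN x : iota (- x) = - iota x.
Proof. by apply/eqP; rewrite -subr_eq0 opprK -iotaD addNr iota0. Qed.

Lemma iotaM x y : iota x * y = iota (x * pi y).
Proof.
rewrite -[y]natrR pi_nat -[x]natrF -natrM !iota_nat -natrM.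
by rewrite mulnA.
Qed.

Lemma iotaMl x y : y * iota x = iota (pi y * x).
Proof. by rewrite mulrC iotaM mulrC. Qed.

Lemma iota_inj x y : iota x = iota y -> x = y.
Proof.
rewrite !iotaE => /eqP; rewrite natR_eq expnS expn1 -!muln_modr eqn_pmul2l ?prime_gt0 //.
rewrite !modn_small ?valF_lt // => /eqP; exact: val_inj.
Qed.

Lemma pi_iota x : pi (iota x) = 0.
Proof. by rewrite iotaE pi_nat natrM pchar_Fp_0 // mul0r. Qed.

Lemma iota_dlt y : pi y = 0 -> y = iota (dlt y).
Proof.
move=> /eqP; rewrite /pi -(natrF 0) natF_eq mod0n => /eqP hy.
rewrite /dlt iota_nat mulnC divnK ?natrR //.
by rewrite /dvdn hy.
Qed.

Lemma pi_lift x : pi (lift x) = x.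
Proof. by rewrite /lift pi_nat natrF. Qed.

Lemma unit_pi x : pi x != 0 -> x \is a GRing.unit.
Proof.
rewrite -[x]natrR unitZpE ?p2_gt1 // coprime_pexpl // prime_coprime // pi_nat.
by rewrite (dvdn_pcharf (pchar_Fp pr_p)).
Qed.

Lemma pi_unit x : x \is a GRing.unit -> pi x != 0.
Proof.
move=> u; apply/eqP => h; have := mulrV u; move/(congr1 pi).
by rewrite piM h mul0r pi1 => /eqP; rewrite eq_sym oner_eq0.
Qed.


Lemma eq_by (V : comPzRingType) (u v e f : V) : e = f -> u - v = e - f -> u = v.
Proof. by move=> -> h; apply/eqP; rewrite -subr_eq0 h subrr. Qed.

Lemma redmx2 (a b c d : R) : redmx (mx2 a b c d) = mx2 (pi a) (pi b) (pi c) (pi d).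
Proof. exact: mx2_map. Qed.

Lemma lift_units (a b c d : R) : ~ (pi c = 0 /\ pi b = 0 /\ pi a = pi d) ->
  [\/ c \is a GRing.unit, b \is a GRing.unit | (c + d - a - b) \is a GRing.unit].
Proof.
move/nonscalar_units; rewrite !unitfE; case=> h; [constructor 1|constructor 2|constructor 3];
  apply: unit_pi => //.
by rewrite !piB piD.
Qed.

Lemma part2 (a : F) (b : nat) : (b%:R : F) = a ->
  forall A : 'M[R]_2, GL_f2 a A -> exists! N : 'M[R]_2, NF_ii b N /\ GLconj A N.
Proof.
move=> hb A [_ hm]; rewrite (mx2E A) in hm *.
move: (A 0 0) (A 0 1) (A 1 0) (A 1 1) hm => x y z w hm.
rewrite redmx2 sq_quad in hm; case: (minpoly_quad hm) => htr hdet hns.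
rewrite opprK in htr.
set bR := (b%:R : R).
have pib : pi bR = a by rewrite pi_nat.
set al := dlt (x + w - (bR + bR)).
have hal : x + w - (bR + bR) = iota al.
  by apply: iota_dlt; rewrite piB !piD htr pib subrr.
set et := dlt (x * w - y * z - bR * bR - iota al * bR).
have het : x * w - y * z - bR * bR - iota al * bR = iota et.
  by apply: iota_dlt; rewrite !piB !piM pi_iota hdet pib mul0r subr0 subrr.
have NE : forall al' ga', mx2 bR 1 0 bR + mx2 (iota al') 0 (iota ga') 0 =
    mx2 (bR + iota al') 1 (iota ga') bR.
  by move=> al' ga'; rewrite mx2_add addr0 add0r addr0.
exists (mx2 bR 1 0 bR + mx2 (iota al) 0 (iota (- et)) 0); split.
  split; first by exists al, (- et).
  apply/GLconjE; rewrite NE; apply: cj_same.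
  - exact: lift_units.
  - by constructor 2; exact: unitr1.
  - by apply: (eq_by hal); ring.
  - by rewrite iotaN -het; ring.
move=> N' [[al' [ga' ->]] /GLconjE h]; move: h; rewrite -/bR -/(iota al') -/(iota ga') !NE => /cj_inv2 [e1 e2].
have eal : al' = al.
  by apply: iota_inj; rewrite -hal e1; ring.
rewrite eal in e2 *; congr mx2.
rewrite iotaN -het e2; ring.
Qed.


Lemma irr_quad_c0 (a1 a0 : F) : irreducible_poly ('X^2 + a1%:P * 'X + a0%:P) -> a0 != 0.
Proof.
move=> hi; apply/eqP => e; apply: (irr_noroot (r := 0) hi); first by rewrite quad_size.
by rewrite quad_root e !mulr0 !addr0.
Qed.

Lemma part3 (a0 a1 : F) (b0 b1 : nat) :
  irreducible_poly ('X^2 + a1%:P * 'X + a0%:P) ->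
  (b0%:R : F) = a0 -> (b1%:R : F) = a1 ->
  forall A : 'M[R]_2, GL_f ('X^2 + a1%:P * 'X + a0%:P) A ->
    exists! N : 'M[R]_2, NF_iii b0 b1 N /\ GLconj A N.
Proof.
move=> hirr hb0 hb1 A [_ [k hm]]; have a0n := irr_quad_c0 hirr.
have {k}hm := minpoly_pow (quad_size _ _) hm.
rewrite (mx2E A) in hm *.
move: (A 0 0) (A 0 1) (A 1 0) (A 1 1) hm => x y z w hm.
rewrite redmx2 in hm; case: (minpoly_quad hm) => htr hdet hns.
set B0 := (b0%:R : R); set B1 := (b1%:R : R).
have pib0 : pi B0 = a0 by rewrite pi_nat.
have pib1 : pi B1 = a1 by rewrite pi_nat.
set al := dlt (x + w + B1).
have hal : x + w + B1 = iota al.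
  by apply: iota_dlt; rewrite !piD htr pib1 addNr.
set et := dlt (x * w - y * z - B0 + B1 * iota al).
have het : x * w - y * z - B0 + B1 * iota al = iota et.
  by apply: iota_dlt; rewrite piD !piB !piM pi_iota hdet pib0 mulr0 addr0 subrr.
have NE : forall al' be', mx2 0 1 (- B0) (- B1) + mx2 (iota al') (iota be') 0 0 =
    mx2 (iota al') (1 + iota be') (- B0) (- B1).
  by move=> al' be'; rewrite mx2_add !addr0 add0r addrC.
have key : forall be, iota be * B0 = iota (be * a0) by move=> be; rewrite iotaM pib0.
exists (mx2 0 1 (- B0) (- B1) + mx2 (iota al) (iota (et / a0)) 0 0); split.
  split; first by exists al, (et / a0).
  apply/GLconjE; rewrite NE; apply: cj_same.
  - exact: lift_units.
  - constructor 2; apply: unit_pi; rewrite piD pi1 pi_iota addr0; exact: oner_neq0.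
  - by apply: (eq_by hal); ring.
  - have e : iota (et / a0) * B0 = iota et by rewrite key divfK.
    apply: (eq_by (esym e)); rewrite -het; ring.
move=> N' [[al' [be' ->]] /GLconjE h]; move: h.
rewrite -/B0 -/B1 -/(iota al') -/(iota be') !NE => /cj_inv2 [e1 e2].
have eal : al' = al.
  by apply: iota_inj; rewrite -hal e1; ring.
rewrite eal in e2 *; congr mx2; congr (_ + _).
have : iota (be' * a0) = iota et.
  by rewrite -key -het e2; ring.
move/iota_inj => <-; rewrite mulfK //.
Qed.


Definition NFc (C : 'M[F]_2) : Prop :=
  (exists al de : nat, (al <= de)%N /\ (de < p)%N /\ C = mx2 al%:R 0 0 de%:R)
  \/ (exists al : F, C = mx2 al 1 0 al)
  \/ (exists b0 b1 : F, irreducible_poly ('X^2 + b1%:P * 'X + b0%:P) /\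
        C = mx2 0 1 (- b0) (- b1)).

Definition imx (C : 'M[F]_2) : 'M[R]_2 := map_mx iota C.

Lemma NF_i_iff (b : nat) (N : 'M[R]_2) :
  NF_i b N <-> exists C, NFc C /\ N = (b%:R)%:M + imx C.
Proof.
split.
  case=> [[al [de [h1 [h2 ->]]]]|[[al ->]|[b0 [b1 [hi ->]]]]].
  - exists (mx2 al%:R 0 0 de%:R); split; first by left; exists al, de.
    by rewrite /imx mx2_map !iota_nat iota0.
  - exists (mx2 al 1 0 al); split; first by right; left; exists al.
    by rewrite /imx mx2_map iota0.
  - exists (mx2 0 1 (- b0) (- b1)); split; first by right; right; exists b0, b1.
    by rewrite /imx mx2_map iota0.
move=> [C [hC ->]].
case: hC => [[al [de [h1 [h2 ->]]]]|[[al ->]|[b0 [b1 [hi ->]]]]].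
- by left; exists al, de; rewrite /imx mx2_map !iota_nat iota0.
- by right; left; exists al; rewrite /imx mx2_map iota0.
- by right; right; exists b0, b1; rewrite /imx mx2_map iota0.
Qed.

Lemma cj_lift2 (c0 c1 c2 c3 d0 d1 d2 d3 : F) :
  cj (mx2 c0 c1 c2 c3) (mx2 d0 d1 d2 d3) <->
  cj (mx2 (iota c0) (iota c1) (iota c2) (iota c3)) (mx2 (iota d0) (iota d1) (iota d2) (iota d3)).
Proof.
split.
  move=> [Q [uQ e]]; rewrite (mx2E Q) in uQ e.
  move: uQ e; rewrite unitmxE mx2_det unitfE !mx2_mul => uQ e; have [e0 e1 e2 e3] := mx2_inj e.
  exists (mx2 (lift (Q 0 0)) (lift (Q 0 1)) (lift (Q 1 0)) (lift (Q 1 1))); split.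
    by rewrite unitmxE mx2_det; apply: unit_pi; rewrite piB !piM !pi_lift.
  rewrite !mx2_mul !iotaM !iotaMl !pi_lift -!iotaD.
  by rewrite e0 e1 e2 e3.
move=> [P [uP e]]; rewrite (mx2E P) in uP e.
move: uP e; rewrite unitmxE mx2_det !mx2_mul => uP e; have [e0 e1 e2 e3] := mx2_inj e.
move: e0 e1 e2 e3; rewrite !iotaM !iotaMl -!iotaD.
move=> /iota_inj e0 /iota_inj e1 /iota_inj e2 /iota_inj e3.
exists (mx2 (pi (P 0 0)) (pi (P 0 1)) (pi (P 1 0)) (pi (P 1 1))); split.
  by rewrite unitmxE mx2_det unitfE -!piM -piB; apply: pi_unit.
by rewrite !mx2_mul e0 e1 e2 e3.
Qed.

Lemma cj_lift (C C' : 'M[F]_2) : cj C C' <-> cj (imx C) (imx C').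
Proof. by rewrite (mx2E C) (mx2E C') /imx !mx2_map; exact: cj_lift2. Qed.


Lemma classify (B : 'M[F]_2) : exists C, NFc C /\ cj B C.
Proof.
rewrite (mx2E B); move: (B 0 0) (B 0 1) (B 1 0) (B 1 1) => x y z w.
have [sc|nsc] := boolP [&& z == 0, y == 0 & x == w].
  case/and3P: sc => /eqP -> /eqP -> /eqP ->.
  exists (mx2 w 0 0 w); split; last exact: cj_refl.
  by left; exists (nat_of_ord w), (nat_of_ord w); rewrite natrF leqnn valF_lt.
have hns : ~ (z = 0 /\ y = 0 /\ x = w).
  by move=> [ez [ey exw]]; move: nsc; rewrite ez ey exw !eqxx.
have uB := nonscalar_units hns.
have [/existsP [r /eqP hr]|nr] := boolP [exists r : F, r * r - (x + w) * r + (x * w - y * z) == 0].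
  have hd : x * w - y * z = r * (x + w - r).
    by apply: (eq_by hr); ring.
  have [ers|nrs] := eqVneq r (x + w - r).
    exists (mx2 r 1 0 r); split; first by right; left; exists r.
    apply: cj_same; first exact: uB.
    - by constructor 2; exact: unitr1.
    - by rewrite {2}ers; ring.
    - by rewrite hd -ers; ring.
  have gen : forall u v : F, u != v -> u + v = x + w -> u * v = x * w - y * z ->
      cj (mx2 x y z w) (mx2 u 0 0 v).
    move=> u v nuv e1 e2; apply: cj_same; first exact: uB.
    - constructor 3; rewrite unitfE (_ : _ - _ = v - u); last by ring.
      by rewrite subr_eq0 eq_sym.
    - by rewrite e1.
    - by rewrite -e2; ring.
  have [le|lt] := leqP (nat_of_ord r) (nat_of_ord (x + w - r)).
    exists (mx2 r 0 0 (x + w - r)); split.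
      by left; exists (nat_of_ord r), (nat_of_ord (x + w - r)); rewrite !natrF le valF_lt.
    apply: gen; [exact: nrs | ring | by rewrite hd].
  exists (mx2 (x + w - r) 0 0 r); split.
    left; exists (nat_of_ord (x + w - r)), (nat_of_ord r); rewrite !natrF (ltnW lt) valF_lt //.
  apply: gen; [by rewrite eq_sym | ring | by rewrite hd; ring].
exists (mx2 0 1 (- (x * w - y * z)) (x + w)); split.
  right; right; exists (x * w - y * z), (- (x + w)); rewrite opprK; split => //.
  apply: cubic_irreducible; first by rewrite quad_size.
  move=> r; rewrite quad_root; apply: contra nr => h; apply/existsP; exists r.
  by rewrite (_ : _ - _ + _ = r * r + - (x + w) * r + (x * w - y * z)) //; ring.
apply: cj_same; first exact: uB.
- by constructor 2; exact: unitr1.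
- by ring.
- by ring.
Qed.


Lemma u11 (al de al' de' : nat) : (al <= de)%N -> (de < p)%N -> (al' <= de')%N -> (de' < p)%N ->
  cj (mx2 (al%:R : F) 0 0 de%:R) (mx2 al'%:R 0 0 de'%:R) ->
  mx2 (al%:R : F) 0 0 de%:R = mx2 al'%:R 0 0 de'%:R.
Proof.
move=> h1 h2 h1' h2' /cj_inv2 [e1 e2].
have h0 : ((al%:R : F) - al'%:R) * (al%:R - de'%:R) = 0.
  rewrite (_ : _ * _ = al%:R * al%:R - al%:R * (al'%:R + de'%:R) + (al'%:R * de'%:R - 0 * 0)); last by ring.
  rewrite -e1 -e2; ring.
have lal : (al < p)%N by apply: leq_ltn_trans h2.
have lal' : (al' < p)%N by apply: leq_ltn_trans h2'.
move/eqP: h0; rewrite mulf_eq0 !subr_eq0 => /orP [] /eqP e.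
  have e' : (de%:R : F) = de'%:R by apply: (@addrI _ al%:R); rewrite e1 e.
  by rewrite (natF_small lal lal' e) (natF_small h2 h2' e').
have e' : (de%:R : F) = al'%:R by apply: (@addrI _ al%:R); rewrite e1 e addrC.
have E1 := natF_small lal h2' e; have E2 := natF_small h2 lal' e'.
have E5 : al = al' by lia.
have E6 : de = de' by lia.
by rewrite E5 E6.
Qed.

Lemma u12 (al de be : F) : cj (mx2 al 0 0 de) (mx2 be 1 0 be) -> False.
Proof.
move=> h; have [e1 e2] := cj_inv2 h.
have h0 : (al - de) * (al - de) = 0.
  rewrite (_ : _ * _ = (al + de) * (al + de) - 4%:R * (al * de - 0 * 0)); last by ring.
  rewrite e1 e2; ring.
move/eqP: h0; rewrite mulf_eq0 orbb subr_eq0 => /eqP e.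
move: h; rewrite e -mx2_scalar => /cj_scalar; rewrite mx2_scalar => e3.
have [_ h1 _ _] := mx2_inj e3; move/eqP: h1.
by rewrite oner_eq0.
Qed.

Lemma u13 (al de b0 b1 : F) : irreducible_poly ('X^2 + b1%:P * 'X + b0%:P) ->
  cj (mx2 al 0 0 de) (mx2 0 1 (- b0) (- b1)) -> False.
Proof.
move=> hi /cj_inv2 [e1 e2]; apply: (irr_noroot (r := al) hi); first by rewrite quad_size.
rewrite quad_root (_ : _ + _ + _ = al * al - (0 + - b1) * al + (0 * - b1 - 1 * - b0)); last by ring.
by rewrite -e1 -e2; apply/eqP; ring.
Qed.

Lemma u22 (be be' : F) : cj (mx2 be 1 0 be) (mx2 be' 1 0 be') -> be = be'.
Proof.
move=> /cj_inv2 [e1 e2].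
have h0 : (be - be') * (be - be') = 0.
  rewrite (_ : _ * _ = (be * be - 1 * 0) - (be + be) * be' + be' * be'); last by ring.
  rewrite e1 e2; ring.
by move/eqP: h0; rewrite mulf_eq0 orbb subr_eq0 => /eqP.
Qed.

Lemma u23 (be b0 b1 : F) : irreducible_poly ('X^2 + b1%:P * 'X + b0%:P) ->
  cj (mx2 be 1 0 be) (mx2 0 1 (- b0) (- b1)) -> False.
Proof.
move=> hi /cj_inv2 [e1 e2]; apply: (irr_noroot (r := be) hi); first by rewrite quad_size.
rewrite quad_root (_ : _ + _ + _ = be * be - (0 + - b1) * be + (0 * - b1 - 1 * - b0)); last by ring.
by rewrite -e1 -e2; apply/eqP; ring.
Qed.

Lemma u33 (b0 b1 b0' b1' : F) :
  cj (mx2 0 1 (- b0) (- b1)) (mx2 0 1 (- b0') (- b1')) -> mx2 0 1 (- b0) (- b1) = mx2 0 1 (- b0') (- b1').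
Proof.
move=> /cj_inv2 [e1 e2].
have E1 : b1 = b1' by apply: oppr_inj; rewrite -(add0r (- b1)) e1 add0r.
have E0 : b0 = b0'.
  rewrite (_ : b0 = 0 * - b1 - 1 * - b0); last by ring.
  by rewrite e2; ring.
by rewrite E0 E1.
Qed.

Lemma NFc_uniq C C' : NFc C -> NFc C' -> cj C C' -> C = C'.
Proof.
move=> hC hC' h.
case: hC h => [[al [de [h1 [h2 ->]]]]|[[be ->]|[b0 [b1 [hi ->]]]]];
case: hC' => [[al' [de' [h1' [h2' ->]]]]|[[be' ->]|[b0' [b1' [hi' ->]]]]] h.
- exact: u11.
- by case: (u12 h).
- by case: (u13 hi' h).
- by case: (u12 (cj_sym h)).
- by rewrite (u22 h).
- by case: (u23 hi' h).
- by case: (u13 hi (cj_sym h)).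
- by case: (u23 hi (cj_sym h)).
- exact: u33.
Qed.


Lemma part1 (a : F) (b : nat) : (b%:R : F) = a ->
  forall A : 'M[R]_2, GL_f11 a A -> exists! N : 'M[R]_2, NF_i b N /\ GLconj A N.
Proof.
move=> hb A [_ hm]; rewrite (mx2E A) in hm *.
move: (A 0 0) (A 0 1) (A 1 0) (A 1 1) hm => x y z w hm.
rewrite redmx2 mx2_scalar in hm; have [ex ey ez ew] := mx2_inj hm.
set bR := (b%:R : R).
have pib : pi bR = a by rewrite pi_nat.
set B := mx2 (dlt (x - bR)) (dlt y) (dlt z) (dlt (w - bR)).
have eA : mx2 x y z w = bR%:M + imx B.
  rewrite mx2_scalar /imx mx2_map mx2_add !add0r.
  rewrite -!iota_dlt ?piB ?ex ?ey ?ez ?ew ?pib ?subrr //.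
  by congr mx2; ring.
have [C [hC hBC]] := classify B.
exists (bR%:M + imx C); split.
  split; first by apply/NF_i_iff; exists C.
  by apply/GLconjE; rewrite eA; apply: cj_shift; apply/cj_lift.
move=> N' [/NF_i_iff [C' [hC' ->]] /GLconjE h].
have h2 : cj (bR%:M + imx C) (bR%:M + imx C').
  apply: cj_trans h; rewrite eA; apply: cj_sym; apply: cj_shift; apply/cj_lift.
  exact: hBC.
have := cj_unshift h2; move/cj_lift => h3.
by rewrite (NFc_uniq hC hC' h3).
Qed.

End Red.

Theorem theorem3p2 (p : nat) (pr_p : prime p) :
  (* (i) *)
  (forall (a : 'F_p) (b : nat), a != 0 -> (0 < b < p)%N -> (b%:R : 'F_p) = a ->
     forall A : 'M['Z_(p ^ 2)]_2, GL_f11 a A ->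
       exists! N : 'M['Z_(p ^ 2)]_2, NF_i b N /\ GLconj A N)
  /\
  (* (ii) *)
  (forall (a : 'F_p) (b : nat), a != 0 -> (0 < b < p)%N -> (b%:R : 'F_p) = a ->
     forall A : 'M['Z_(p ^ 2)]_2, GL_f2 a A ->
       exists! N : 'M['Z_(p ^ 2)]_2, NF_ii b N /\ GLconj A N)
  /\
  (* (iii) *)
  (forall (a0 a1 : 'F_p) (b0 b1 : nat),
     irreducible_poly ('X^2 + a1%:P * 'X + a0%:P) ->
     (b0 < p)%N -> (b1 < p)%N -> (b0%:R : 'F_p) = a0 -> (b1%:R : 'F_p) = a1 ->
     forall A : 'M['Z_(p ^ 2)]_2, GL_f ('X^2 + a1%:P * 'X + a0%:P) A ->
       exists! N : 'M['Z_(p ^ 2)]_2, NF_iii b0 b1 N /\ GLconj A N).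
Proof.
split; first by move=> a b _ _; exact: part1.
split; first by move=> a b _ _; exact: part2.
by move=> a0 a1 b0 b1 hi _ _; exact: part3.
Qed.
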